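(* Let $\mathcal{R}$ be the involutive system $u_{ij}=f_{ij}(x^1,x^2,x^3,u,u_i,u_j)$, $1\le i<j\le3$, and let $\Theta=\mu\theta$ satisfy on $\mathcal{R}^\infty$ the rescaled universal linearization $X_lX_k(\Theta)+A^l_{lk}X_l(\Theta)+A^k_{lk}X_k(\Theta)+C_{lk}\Theta=0$ for all $1\le l\ne k\le 3$. Fix an ordered pair $(i,j)$, $i\neq j$, and let $\xi_{ij}=X_j(\Theta)+A^i_{ij}\Theta$ be the $(i,j)$ Laplace transform of $\Theta$. If the Laplace invariants $H_{ij}$ and $H_{ijk}$ (for $k\ne i,j$) are nonzero, then $\xi_{ij}$ satisfies a system of the same form, i.e. there are smooth functions $\hat A^l_{lk},\hat A^k_{lk},\hat C_{lk}$ on $\mathcal{R}^\infty$ with $X_lX_k(\xi_{ij})+\hat A^l_{lk}X_l(\xi_{ij})+\hat A^k_{lk}X_k(\xi_{ij})+\hat C_{lk}\xi_{ij}=0$ for all $1\le l\ne k\le3$.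
   Context: Setting: $U\subset\mathbb{R}^3$ open connected, $E=U\times(a,b)\to U$ trivial bundle, $J^\infty(E)$ its jet bundle with contact forms $\theta_I=du_I-\sum_ju_{Ij}dx^j$, $\theta=du-\sum_iu_idx^i$. $\mathcal{R}$: $F_{ij}:=u_{ij}-f_{ij}(x^1,x^2,x^3,u,u_i,u_j)=0$, $1\le i<j\le3$, $f_{ij}$ smooth with $D_kf_{ij}=D_if_{kj}$ for distinct $i,j,k$; $\mathcal{R}^\infty$ its infinite prolongation; $X_i=D_i$ the commuting total derivatives on $\mathcal{R}^\infty$; for a total vector field $X$ and a contact form $\omega$, $X(\omega)$ is the projected Lie derivative, with $X_j(\theta_I)=\theta_{Ij}$. Applying $d_V$ to $F_{ij}=0$ gives $X_iX_j(\theta)+a^i_{ij}X_i(\theta)+a^j_{ij}X_j(\theta)+c_{ij}\theta=0$, $a^i_{ij}=\partial F_{ij}/\partial u_i$, $a^j_{ij}=\partial F_{ij}/\partial u_j$, $c_{ij}=\partial F_{ij}/\partial u$. For a nonvanishing function $\mu$, $\Theta=\mu\theta$ satisfies the system above with $A^i_{ij}=a^i_{ij}-X_j(\mu)/\mu$, $A^j_{ij}=a^j_{ij}-X_i(\mu)/\mu$, $C_{ij}=c_{ij}-X_iX_j(\mu)/\mu-a^i_{ij}X_i(\mu)/\mu-a^j_{ij}X_j(\mu)/\mu+2X_i(\mu)X_j(\mu)/\mu^2$; coefficients are symmetric in the lower indices ($A^i_{ji}=A^i_{ij}$, $C_{ji}=C_{ij}$). Laplace invariants: $H_{ij}=D_i(A^i_{ij})+A^i_{ij}A^j_{ij}-C_{ij}$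 for ordered $i\ne j$, and $H_{ijk}=A^k_{kj}-A^i_{ij}$ for $k\ne i,j$. *)

(* Defs.v *)
(* Abstract differential-algebraic model of the infinite
   prolongation R^oo of the system u_ij = f_ij. *)
From HB Require Import structures.
From mathcomp Require Import all_boot all_order all_algebra.
Set Implicit Arguments. Unset Strict Implicit. Unset Printing Implicit Defensive.
Import Order.TTheory GRing.Theory Num.Theory.
Local Open Scope ring_scope.

Section Defs.
Variables (F : comUnitRingType) (M : lmodType F).

(* D i : total derivative D_i acting on functions on R^oo *)
Definition is_derivation (d : F -> F) : Prop :=
  (forall f g, d (f + g) = d f + d g) /\ (forall f g, d (f * g) = d f * g + f * d g).

(* X i : action of the total vector field X_i on contact forms (projected Lie
   derivative), compatible with D i via Leibniz *)
Definition is_form_derivation (d : F -> F) (x : M -> M) : Prop :=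
  (forall v w, x (v + w) = x v + x w) /\ (forall f w, x (f *: w) = d f *: w + f *: x w).

(* the form  X_l X_k(w) + a^l_{lk} X_l(w) + a^k_{lk} X_k(w) + c_{lk} w = 0 for all l<>k;
   coefficient  a p l k  stands for a^p_{lk} *)
Definition satisfies_system (X : 'I_3 -> M -> M)
    (a : 'I_3 -> 'I_3 -> 'I_3 -> F) (c : 'I_3 -> 'I_3 -> F) (w : M) : Prop :=
  forall l k : 'I_3, l != k ->
    X l (X k w) + a l l k *: X l w + a k l k *: X k w + c l k *: w = 0.

Definition symmetric_coefs (a : 'I_3 -> 'I_3 -> 'I_3 -> F) (c : 'I_3 -> 'I_3 -> F) : Prop :=
  (forall p l k, a p l k = a p k l) /\ (forall l k, c l k = c k l).

(* rescaled coefficients for Theta = mu theta: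
   A^i_{ij} = a^i_{ij} - X_j(mu)/mu  (the subtracted derivative is along the other
   lower index) *)
Definition Acoef (D : 'I_3 -> F -> F) (a : 'I_3 -> 'I_3 -> 'I_3 -> F) (mu : F)
    (p i j : 'I_3) : F :=
  a p i j - D (if p == i then j else i) mu / mu.

Definition Ccoef (D : 'I_3 -> F -> F) (a : 'I_3 -> 'I_3 -> 'I_3 -> F)
    (c : 'I_3 -> 'I_3 -> F) (mu : F) (i j : 'I_3) : F :=
  c i j - D i (D j mu) / mu - a i i j * D i mu / mu - a j i j * D j mu / mu
  + 2%:R * D i mu * D j mu / mu ^+ 2.

Definition Hinv (D : 'I_3 -> F -> F) (A : 'I_3 -> 'I_3 -> 'I_3 -> F)
    (C : 'I_3 -> 'I_3 -> F) (i j : 'I_3) : F :=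
  D i (A i i j) + A i i j * A j i j - C i j.

Definition Hinv3 (A : 'I_3 -> 'I_3 -> 'I_3 -> F) (i j k : 'I_3) : F :=
  A k k j - A i i j.

Definition laplace_transform (X : 'I_3 -> M -> M) (A : 'I_3 -> 'I_3 -> 'I_3 -> F)
    (i j : 'I_3) (Theta : M) : M :=
  X j Theta + A i i j *: Theta.

End Defs.

(* Main.v *)
Require Import Defs.
From HB Require Import structures.
From mathcomp Require Import all_boot all_order all_algebra.
From mathcomp Require Import ring.
Import Order.TTheory GRing.Theory Num.Theory.
Local Open Scope ring_scope.
Definition ext (F : comUnitRingType) (M : lmodType F) := (F * M)%type.
Arguments ext {F} M.
HB.instance Definition _ F M := GRing.Zmodule.on (@ext F M).
Section Ext.
Variables (F : comUnitRingType) (M : lmodType F).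
Definition emul (x y : ext M) : ext M := (x.1 * y.1, x.1 *: y.2 + y.1 *: x.2).
Definition eone : ext M := (1, 0).
Lemma emulA : associative emul.
Proof. move=> [a v] [b w] [c u]; rewrite /emul /=; congr pair; first by rewrite mulrA.
by rewrite !scalerDr !scalerA addrA [c * b]mulrC [c*a]mulrC; congr (_ + _); rewrite addrC; congr (_ + _); rewrite mulrC. Qed.
Lemma emulC : commutative emul.
Proof. by move=> [a v] [b w]; rewrite /emul /= mulrC addrC. Qed.
Lemma emul1 : left_id eone emul.
Proof. by move=> [a v]; rewrite /emul /eone /= mul1r scale1r scaler0 addr0. Qed.
Lemma emulDl : left_distributive emul +%R.
Proof. move=> [a v] [b w] [c u]; rewrite /emul /=; congr pair; first by rewrite mulrDl.
by rewrite scalerDl scalerDr addrACA. Qed.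
End Ext.
HB.instance Definition _ F M := GRing.Zmodule_isComPzRing.Build (@ext F M)
  (@emulA F M) (@emulC F M) (@emul1 F M) (@emulDl F M).
Section Ext2.
Variables (F : comUnitRingType) (M : lmodType F).
Definition emb (f : F) : ext M := (f, 0).
Lemma emb_is_zmod : zmod_morphism emb.
Proof. by move=> x y; rewrite /emb; congr pair; rewrite subrr. Qed.
Lemma emb_is_mon : monoid_morphism emb.
Proof. split => //= x y; rewrite /emb /= /emul /=; congr pair; by rewrite !scaler0 addr0. Qed.
End Ext2.
Arguments emb {F M}.
HB.instance Definition _ (F : comUnitRingType) (M : lmodType F) := GRing.isZmodMorphism.Build F (ext M) (@emb F M) (@emb_is_zmod F M).
HB.instance Definition _ (F : comUnitRingType) (M : lmodType F) := GRing.isMonoidMorphism.Build F (ext M) (@emb F M) (@emb_is_mon F M).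
Section Ext3.
Variables (F : comUnitRingType) (M : lmodType F).
Definition inj (v : M) : ext M := (0, v).
Lemma injD v w : inj (v + w) = inj v + inj w.
Proof. rewrite /inj; change (((0:F), v + w) = ((0:F) + 0, v + w)); by rewrite addr0. Qed.
Lemma injN v : inj (- v) = - inj v.
Proof. by apply: (addrI (inj v)); rewrite -injD !subrr. Qed.
Lemma injZ f v : inj (f *: v) = @emb F M f * inj v.
Proof. rewrite /inj /emb; change (((0:F), f *: v) = (f * 0, f *: v + 0 *: (0:M))); by rewrite mulr0 scaler0 addr0. Qed.
Lemma inj0 : inj 0 = 0. Proof. by []. Qed.
Lemma inj_inj v w : inj v = inj w -> v = w. Proof. by case. Qed.
End Ext3.
Arguments inj {F M}.

Lemma cover (i j k x : 'I_3) : i != j -> i != k -> j != k -> [|| x == i, x == j | x == k].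
Proof. by move: i j k x; do 4! case=> [[|[|[|?]]] ?] //. Qed.
Lemma third (i j : 'I_3) : i != j -> exists k : 'I_3, (k != i) && (k != j).
Proof. move: i j; case=> [[|[|[|?]]] ?]; case=> [[|[|[|?]]] ?] //= _.
all: first [by exists (@Ordinal 3 0 isT) | by exists (@Ordinal 3 1 isT) | by exists (@Ordinal 3 2 isT)]. Qed.
Lemma sum3 (V : zmodType) (f : 'I_3 -> V) (i j k : 'I_3) : i != j -> i != k -> j != k ->
  \sum_(l < 3) f l = f i + f j + f k.
Proof.
move=> hij hik hjk.
rewrite (bigD1 i) //= (bigD1 j) 1?eq_sym //= (bigD1 k) /=; last by rewrite !(eq_sym k) hik hjk.
rewrite big_pred0 ?addr0 ?addrA // => x.
by have := cover i j k x hij hik hjk; case: (x == i); case: (x == j); case: (x == k).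
Qed.
Section Gen.
Variables (F : comUnitRingType) (M : lmodType F) (D : 'I_3 -> F -> F) (X : 'I_3 -> M -> M).
Hypothesis hX : forall i, is_form_derivation (D i) (X i).
Hypothesis hXcomm : forall i j w, X i (X j w) = X j (X i w).

Lemma XD l v w : X l (v + w) = X l v + X l w. Proof. exact: (hX l).1. Qed.
Lemma XZ l f w : X l (f *: w) = D l f *: w + f *: X l w. Proof. exact: (hX l).2. Qed.
Lemma X0 l : X l 0 = 0.
Proof. by apply: (addrI (X l 0)); rewrite -XD !addr0. Qed.
Lemma XN l v : X l (- v) = - X l v.
Proof. by apply: (addrI (X l v)); rewrite -XD !subrr X0. Qed.

Lemma eq_neg (x y z w : M) : x + y + z + w = 0 -> x = -(y + z + w).
Proof. by move=> h; apply/eqP; rewrite -subr_eq0 opprK !addrA h. Qed.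

Lemma comb3 (G Z1 Z2 Z3 : M) (e1 e2 e3 : F) : Z1 = 0 -> Z2 = 0 -> Z3 = 0 ->
  inj G = emb e1 * inj Z1 + emb e2 * inj Z2 + emb e3 * inj Z3 -> G = 0.
Proof. by move=> -> -> ->; rewrite inj0 !mulr0 !addr0 -(@inj0 F M) => /inj_inj. Qed.
Lemma comb4 (G Z1 Z2 Z3 Z4 : M) (e1 e2 e3 e4 : F) : Z1 = 0 -> Z2 = 0 -> Z3 = 0 -> Z4 = 0 ->
  inj G = emb e1 * inj Z1 + emb e2 * inj Z2 + emb e3 * inj Z3 + emb e4 * inj Z4 -> G = 0.
Proof. by move=> -> -> -> ->; rewrite inj0 !mulr0 !addr0 -(@inj0 F M) => /inj_inj. Qed.

Lemma subr0E (x y : M) : x = y -> x - y = 0.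
Proof. by move=> ->; rewrite subrr. Qed.

Lemma swap_sys l m (p q r : F) w :
  X l (X m w) + p *: X l w + q *: X m w + r *: w = 0 ->
  X m (X l w) + q *: X m w + p *: X l w + r *: w = 0.
Proof.
move=> h; apply: etrans h; rewrite (hXcomm m l).
by apply: inj_inj; rewrite !(injD, injZ); ring.
Qed.

Lemma gauge (a : 'I_3 -> 'I_3 -> 'I_3 -> F) (c : 'I_3 -> 'I_3 -> F) (th : M) (mu : F) :
  mu \is a GRing.unit -> satisfies_system X a c th ->
  forall l m, l != m -> X l (X m (mu *: th)) + Acoef D a mu l l m *: X l (mu *: th)
    + Acoef D a mu m l m *: X m (mu *: th) + Ccoef D a c mu l m *: (mu *: th) = 0.
Proof.
move=> hmu hth l m hlm.
have hml : (m == l) = false by rewrite eq_sym (negbTE hlm).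
have E' : mu *: (X l (X m th) + a l l m *: X l th + a m l m *: X m th + c l m *: th) = 0.
  by rewrite hth // scaler0.
rewrite /Acoef /Ccoef eqxx hml !(XD, XZ) -exprVn.
apply: etrans E'; apply: inj_inj; rewrite !(injD, injN, injZ).
have hm : @emb F M mu * emb (mu^-1) = 1 by rewrite -rmorphM mulrV // rmorph1.
ring: hm.
Qed.

Section Lap.
Variables (A : 'I_3 -> 'I_3 -> 'I_3 -> F) (C : 'I_3 -> 'I_3 -> F) (T : M) (i j k : 'I_3).
Hypotheses (hij : i != j) (hik : i != k) (hjk : j != k).
Hypothesis hsys : forall l m, l != m ->
  X l (X m T) + A l l m *: X l T + A m l m *: X m T + C l m *: T = 0.
Hypothesis hind : forall c0 ci cj ck,
  c0 *: T + ci *: X i T + cj *: X j T + ck *: X k T = 0 -> ci = 0.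

Local Notation al := (A i i j). Local Notation be := (A j i j). Local Notation ga := (C i j).
Local Notation a2 := (A i i k). Local Notation b2 := (A k i k). Local Notation g2 := (C i k).
Local Notation a3 := (A j j k). Local Notation b3 := (A k j k). Local Notation g3 := (C j k).

Lemma Eij : X i (X j T) = -(al *: X i T + be *: X j T + ga *: T).
Proof. exact: eq_neg (hsys _ _ hij). Qed.
Lemma Eik : X i (X k T) = -(a2 *: X i T + b2 *: X k T + g2 *: T).
Proof. exact: eq_neg (hsys _ _ hik). Qed.
Lemma Ejk : X j (X k T) = -(a3 *: X j T + b3 *: X k T + g3 *: T).
Proof. exact: eq_neg (hsys _ _ hjk). Qed.

Lemma compat2 : D k al = al * a2 - a3 * al - b3 * a2 + g3.
Proof.
have V : X k (X i (X j T)) - X i (X j (X k T)) = 0.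
  by rewrite (hXcomm k i) (hXcomm k j) subrr.
rewrite Eij Ejk !(XN, XD, XZ) (hXcomm k i T) (hXcomm k j T) Eik Eij Ejk in V.
have h : D k al - (al * a2 - a3 * al - b3 * a2 + g3) = 0.
  apply: (hind (- (al * g2 + be * g3 - D k ga - a3 * ga - b3 * g2 + D i g3))
  _ (D k be - D i a3)
  (- (al * b2 + be * b3 - ga + D i b3 - b3 * b2))).
  rewrite -oppr0 -V; apply: inj_inj; rewrite !(injD, injN, injZ); ring.
by apply/eqP; rewrite -subr_eq0 h.
Qed.

Lemma compat1 : D j a2 = D k al.
Proof.
have V : X j (X i (X k T)) - X i (X j (X k T)) = 0.
  by rewrite (hXcomm j i) subrr.
rewrite Eik Ejk !(XN, XD, XZ) (hXcomm j i T) Eik Eij Ejk in V.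
have h : D j a2 - (al * a2 - a3 * al - b3 * a2 + g3) = 0.
  apply: (hind (- (a2 * ga + b2 * g3 - D j g2 - a3 * ga - b3 * g2 + D i g3))
  _ (- (a2 * be + b2 * a3 - g2 + D i a3 - a3 * be))
  (D j b2 - D i b3)).
  rewrite -oppr0 -V; apply: inj_inj; rewrite !(injD, injN, injZ); ring.
by rewrite compat2; apply/eqP; rewrite -subr_eq0 h.
Qed.


Hypothesis hAsym : forall l m, A l l m = A l m l.
Hypothesis hH : Hinv D A C i j \is a GRing.unit.
Hypothesis hH3 : Hinv3 A i j k \is a GRing.unit.

Lemma laplace_main : exists (Ah : 'I_3 -> 'I_3 -> 'I_3 -> F) (Ch : 'I_3 -> 'I_3 -> F),
  symmetric_coefs Ah Ch /\ satisfies_system X Ah Ch (X j T + A i i j *: T).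
Proof.
set xi := X j T + A i i j *: T.
have hxi : xi = X j T + al *: T by [].
clearbody xi.
have P1 : X i xi + be *: xi = Hinv D A C i j *: T.
  rewrite hxi /Hinv !(XD, XZ) Eij.
  by apply: inj_inj; rewrite !(injD, injN, injZ); ring.
move: hH P1; generalize (Hinv D A C i j) => H hHu P1.
have P1' : T = H^-1 *: (X i xi + be *: xi) by rewrite P1 scalerA mulVr ?scale1r //.
have P2 : X k xi + a3 *: xi = - ((b3 - al) *: (X k T + a2 *: T)).
  rewrite hxi !(XD, XZ) (hXcomm k j T) Ejk compat2.
  by apply: inj_inj; rewrite !(injD, injN, injZ); ring.
have hH3' : (b3 - al) \is a GRing.unit by move: hH3; rewrite /Hinv3 (hAsym k j).
move: hH3' P2; generalize (b3 - al) => H3 hH3' P2.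
have P2' : X k T + a2 *: T = - (H3^-1 *: (X k xi + a3 *: xi)).
  by rewrite P2 scalerN opprK scalerA mulVr ?scale1r //.
have Gij : X i (X j xi) + (- (D j H - H * al) * H^-1) *: X i xi + be *: X j xi
    + (D j be - H - (D j H - H * al) * H^-1 * be) *: xi = 0.
  have Z1 := congr1 (X j) P1; rewrite !(XD, XZ) in Z1.
  rewrite (hXcomm i j).
  apply: (comb3 _ _ _ _ 1 (- H) (D j H - H * al) (subr0E _ _ Z1) (subr0E _ _ hxi) (subr0E _ _ P1')).
  by rewrite !(injD, injN, injZ); ring.
have Gik : X i (X k xi) + (- (D k H - H * a2) * H^-1) *: X i xi + (be + H * H3^-1) *: X k xi
    + (D k be + H * H3^-1 * a3 - (D k H - H * a2) * H^-1 * be) *: xi = 0.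
  have Z1 := congr1 (X k) P1; rewrite !(XD, XZ) in Z1.
  rewrite (hXcomm i k).
  apply: (comb3 _ _ _ _ 1 H (D k H - H * a2) (subr0E _ _ Z1) (subr0E _ _ P2') (subr0E _ _ P1')).
  by rewrite !(injD, injN, injZ); ring.
have Gjk : X j (X k xi) + a3 *: X j xi + (- (D j H3 - H3 * b3) * H3^-1) *: X k xi
    + (D j a3 - H3 * (a3 - a2) - (D j H3 - H3 * b3) * H3^-1 * a3) *: xi = 0.
  have W1 := congr1 (X j) P2; rewrite !(XN, XD, XZ) compat1 compat2 in W1.
  apply: (comb4 _ _ _ _ _ 1 (- H3) (H3 * (a2 - a3)) (- (D j H3 - H3 * b3))
    (subr0E _ _ W1) (subr0E _ _ Ejk) (subr0E _ _ hxi) (subr0E _ _ P2')).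
  by rewrite !(injD, injN, injZ); ring.
have cov := cover i j k _ hij hik hjk.
have hji : j != i by rewrite eq_sym.
have hki : k != i by rewrite eq_sym.
have hkj : k != j by rewrite eq_sym.
exists (fun p l m => if p == i then
          (if (l == k) || (m == k) then - (D k H - H * a2) * H^-1 else - (D j H - H * al) * H^-1)
        else if p == j then (if (l == k) || (m == k) then a3 else be)
        else (if (l == i) || (m == i) then be + H * H3^-1 else - (D j H3 - H3 * b3) * H3^-1)).
exists (fun l m => if (l == k) || (m == k) then
          (if (l == i) || (m == i) then D k be + H * H3^-1 * a3 - (D k H - H * a2) * H^-1 * be
           else D j a3 - H3 * (a3 - a2) - (D j H3 - H3 * b3) * H3^-1 * a3)
        else D j be - H - (D j H - H * al) * H^-1 * be).
split.
  split=> [p l m|l m] /=; first by rewrite (orbC (l == k)) (orbC (l == i)).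
  by rewrite (orbC (l == k)) (orbC (l == i)).
move=> l m /=.
have simp := (eqxx, negbTE hij, negbTE hik, negbTE hjk, negbTE hji, negbTE hki, negbTE hkj).
case/or3P: (cov l) => /eqP ->; case/or3P: (cov m) => /eqP ->; rewrite ?eqxx // => _;
  rewrite !simp /=.
- exact: Gij.
- exact: Gik.
- exact: swap_sys Gij.
- exact: Gjk.
- exact: swap_sys Gik.
- exact: swap_sys Gjk.
Qed.

End Lap.
End Gen.

Theorem proposition3p6
  (F : comUnitRingType) (M : lmodType F)
  (D : 'I_3 -> F -> F) (X : 'I_3 -> M -> M)
  (hD : forall i, is_derivation (D i))
  (hDcomm : forall i j f, D i (D j f) = D j (D i f))
  (hX : forall i, is_form_derivation (D i) (X i))
  (hXcomm : forall i j w, X i (X j w) = X j (X i w))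
  (a : 'I_3 -> 'I_3 -> 'I_3 -> F) (c : 'I_3 -> 'I_3 -> F) (theta : M)
  (hsym : symmetric_coefs a c)
  (htheta : satisfies_system X a c theta)
  (hindep : forall (c0 : F) (cs : 'I_3 -> F),
      c0 *: theta + \sum_(l < 3) cs l *: X l theta = 0 ->
      c0 = 0 /\ forall l, cs l = 0)
  (mu : F) (hmu : mu \is a GRing.unit)
  (i j : 'I_3) (hij : i != j)
  (hH : Hinv D (Acoef D a mu) (Ccoef D a c mu) i j \is a GRing.unit)
  (hH3 : forall k : 'I_3, k != i -> k != j ->
      Hinv3 (Acoef D a mu) i j k \is a GRing.unit) :
  exists (Ah : 'I_3 -> 'I_3 -> 'I_3 -> F) (Ch : 'I_3 -> 'I_3 -> F),
    symmetric_coefs Ah Ch /\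
    satisfies_system X Ah Ch (laplace_transform X (Acoef D a mu) i j (mu *: theta)).
Proof.
have [k0 /andP [hk0i hk0j]] := third i j hij.
have hik : i != k0 by rewrite eq_sym.
have hjk : j != k0 by rewrite eq_sym.
have hji : j != i by rewrite eq_sym.
have hsysT := @gauge _ _ _ _ hX a c theta mu hmu htheta.
have hAsymT : forall l m, Acoef D a mu l l m = Acoef D a mu l m l.
  move=> l m; rewrite /Acoef eqxx; case: ifP => [/eqP -> // | _].
  by rewrite (hsym.1 l l m).
have hT : forall (d0 : F) (ds : 'I_3 -> F),
    d0 *: (mu *: theta) + \sum_(l < 3) ds l *: X l (mu *: theta) = 0 -> forall l, ds l = 0.
  move=> d0 ds hd l.
  have hd' : (d0 * mu + \sum_(l < 3) ds l * D l mu) *: theta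
      + \sum_(l < 3) (ds l * mu) *: X l theta = 0.
    apply: etrans hd; rewrite scalerDl scaler_suml -addrA scalerA; congr (_ + _).
    rewrite -big_split /=.
    by apply: eq_bigr => l' _; rewrite (hX l').2 scalerDr !scalerA.
  have [_ /(_ l) hl] := hindep _ _ hd'.
  by rewrite -(mulrK hmu (ds l)) hl mul0r.
have hindT : forall c0 ci cj ck : F,
    c0 *: (mu *: theta) + ci *: X i (mu *: theta) + cj *: X j (mu *: theta)
    + ck *: X k0 (mu *: theta) = 0 -> ci = 0.
  move=> c0 ci cj ck h.
  pose cs := fun l : 'I_3 => if l == i then ci else if l == j then cj else ck.
  have <- : cs i = ci by rewrite /cs eqxx.
  apply: (hT c0 cs).
  rewrite (sum3 _ _ _ _ _ hij hik hjk) /cs eqxx (negbTE hji) eqxx (negbTE hk0i) (negbTE hk0j) /=.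
  by rewrite !addrA.
have [Ah [Ch [hs hsat]]] := @laplace_main _ _ _ _ hX hXcomm _ _ _ _ _ _ hij hik hjk hsysT hindT hAsymT hH (hH3 k0 hk0i hk0j).
by exists Ah, Ch.
Qed.
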